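(* Let $M$ be a matroid flock on a finite set $E$, let $\alpha\in\mathbb{Z}^E$ and let $I\subseteq J\subseteq E$. Then $r_\alpha(J)=r_\alpha(I)+r_{\alpha+e_I}(J\setminus I)$.
   Context: $e_I:=\sum_{i\in I}e_i$ ($e_i$ unit vectors in $\mathbb{Z}^E$), $\mathbf{1}:=e_E$. A matroid flock of rank $d$ on $E$ is a map $M$ assigning to each $\alpha\in\mathbb{Z}^E$ a matroid $M_\alpha$ on $E$ of rank $d$ with (MF1) $M_\alpha/i=M_{\alpha+e_i}\setminus i$ for all $\alpha$, $i\in E$ (contraction, deletion); and (MF2) $M_\alpha=M_{\alpha+\mathbf{1}}$ for all $\alpha$. $r_\alpha$ denotes the rank function of $M_\alpha$. *)

(* Defs.v *)
From mathcomp Require Import all_boot all_order all_algebra.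
Set Implicit Arguments. Unset Strict Implicit. Unset Printing Implicit Defensive.
Import GRing.Theory.
Local Open Scope ring_scope.

Section Matroids.
Variable E : finType.

Definition is_matroid (Ind : {set {set E}}) : Prop :=
  [/\ set0 \in Ind,
      (forall A B : {set E}, B \in Ind -> A \subset B -> A \in Ind) &
      (forall A B : {set E}, A \in Ind -> B \in Ind -> (#|A| < #|B|)%N ->
          exists2 x, x \in B :\: A & x |: A \in Ind)].

Definition mrank (Ind : {set {set E}}) (A : {set E}) : nat :=
  \max_(B in Ind | B \subset A) #|B|.

(* deletion M \ i (a matroid on E \ {i}, encoded by its independent sets) *)
Definition mdelete (Ind : {set {set E}}) (i : E) : {set {set E}} :=
  [set B in Ind | i \notin B].

(* contraction M / i (a matroid on E \ {i}); if i is a loop, M/i = M\i *)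
Definition mcontract (Ind : {set {set E}}) (i : E) : {set {set E}} :=
  if [set i] \in Ind then [set B : {set E} | (i \notin B) && ((i |: B) \in Ind)]
  else mdelete Ind i.

Definition eI (I : {set E}) : {ffun E -> int} := [ffun j => ((j \in I) : nat)%:Z].

Definition matroid_flock (d : nat) (M : {ffun E -> int} -> {set {set E}}) : Prop :=
  [/\ (forall a, is_matroid (M a) /\ mrank (M a) setT = d),
      (forall a i, mcontract (M a) i = mdelete (M (a + eI [set i])) i) &
      (forall a, M a = M (a + eI setT))].
End Matroids.

(* Main.v *)
Require Import Defs.
From mathcomp Require Import all_boot all_order all_algebra.
Import GRing.Theory.
Local Open Scope ring_scope.

Section Aux.
Variable E : finType.
Implicit Types (Ind : {set {set E}}) (A B C : {set E}).

Lemma rank_ub Ind A B : B \in Ind -> B \subset A -> (#|B| <= mrank Ind A)%N.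
Proof. by move=> h1 h2; rewrite /mrank (leq_bigmax_cond (F := fun B => #|B|) B) // h1 h2. Qed.

Lemma rankP Ind A n :
  (exists2 B, (B \in Ind) && (B \subset A) & #|B| = n) ->
  (forall B, B \in Ind -> B \subset A -> (#|B| <= n)%N) -> mrank Ind A = n.
Proof.
move=> [B /andP[h1 h2] <-] hub; apply/eqP; rewrite eqn_leq rank_ub // andbT.
by apply/bigmax_leqP => C /andP[c1 c2]; apply: hub.
Qed.

Lemma rank_wit Ind A : set0 \in Ind ->
  exists2 B, (B \in Ind) && (B \subset A) & #|B| = mrank Ind A.
Proof.
move=> h0.
have hp : (0 < #|[pred B | (B \in Ind) && (B \subset A)]|)%N.
  by apply/card_gt0P; exists set0; rewrite inE h0 sub0set.
have [B hB e] := eq_bigmax_cond (fun B : {set E} => #|B|) hp.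
exists B; first by rewrite inE in hB.
by rewrite -e /mrank; apply: eq_bigl => C; rewrite inE.
Qed.

Lemma rank_delete Ind (i : E) A : i \notin A -> mrank (mdelete Ind i) A = mrank Ind A.
Proof.
move=> hi; rewrite /mrank; apply: eq_bigl => B; rewrite /mdelete inE.
case hBA: (B \subset A); rewrite ?andbF // andbT.
case: (B \in Ind) => //=; apply/negP => hiB; by rewrite (subsetP hBA _ hiB) in hi.
Qed.

Lemma rank_single Ind (i : E) (J : {set E}) : is_matroid Ind -> i \in J ->
  mrank Ind J = (mrank Ind [set i] + mrank (mcontract Ind i) (J :\ i))%N.
Proof.
move=> [h0 hsub haug] hiJ; rewrite /mcontract.
case: ifP => hi.
- have -> : mrank Ind [set i] = 1%N.
    apply: rankP; first by exists [set i]; rewrite ?hi ?subxx ?cards1.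
    by move=> B _ hB; rewrite -(cards1 i) subset_leq_card.
  set n := mrank Ind J.
  have hp : (0 < #|[pred C | [&& C \in Ind, C \subset J & i \in C]]|)%N.
    by apply/card_gt0P; exists [set i]; rewrite inE hi sub1set hiJ set11.
  have [C hC hmax] := eq_bigmax_cond (fun B : {set E} => #|B|) hp.
  rewrite inE in hC; case/and3P: hC => c1 c2 c3.
  have hCn : #|C| = n.
    apply/eqP; rewrite eqn_leq rank_ub //=; rewrite leqNgt; apply/negP => hlt.
    have [B /andP[b1 b2] hB] := rank_wit Ind J h0.
    rewrite /n -hB in hlt.
    have [x /setDP[xB xC] hx] := haug _ _ c1 b1 hlt.
    have : (#|x |: C| <= #|C|)%N.
      rewrite -hmax; apply: (leq_bigmax_cond (F := fun B : {set E} => #|B|)).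
      by rewrite inE hx /= subUset sub1set (subsetP b2 _ xB) c2 in_setU c3 orbT.
    by rewrite cardsU1 xC add1n ltnn.
  have hn : (0 < n)%N by rewrite -hCn; apply/card_gt0P; exists i.
  rewrite (@rankP _ _ n.-1) ?add1n ?(prednK hn) //.
  + exists (C :\ i); last by move: (cardsD1 i C); rewrite c3 hCn add1n => ->.
    rewrite inE setD1K // c1 setD11 /=; exact: setSD.
  + move=> B; rewrite inE => /andP[b1 b2] hB.
    have := rank_ub Ind J _ b2; rewrite -/n cardsU1 b1 add1n => h.
    rewrite -ltnS (prednK hn); apply: h.
    by rewrite subUset sub1set hiJ (subset_trans hB) // subD1set.
- have -> : mrank Ind [set i] = 0%N.
    apply: rankP; first by exists set0; rewrite ?h0 ?sub0set ?cards0.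
    move=> B hB; rewrite subset1 => /orP[/eqP hBi|/eqP ->]; last by rewrite cards0.
    by rewrite hBi hi in hB.
  rewrite add0n rank_delete ?setD11 //; symmetry; apply: rankP.
  + have [B /andP[b1 b2] hB] := rank_wit Ind J h0.
    exists B => //; rewrite b1 /= subsetD1 b2 /=; apply/negP => hiB.
    have h1 : [set i] \subset B by rewrite sub1set.
    by move: (hsub _ _ b1 h1); rewrite hi.
  + move=> B b1 b2; apply: rank_ub b1 _; exact: (subset_trans b2 (subD1set _ _)).
Qed.

End Aux.

Theorem mainTheorem9 (E : finType) (d : nat)
    (M : {ffun E -> int} -> {set {set E}}) (hM : matroid_flock d M)
    (alpha : {ffun E -> int}) (I J : {set E}) (hIJ : I \subset J) :
  mrank (M alpha) J = (mrank (M alpha) I + mrank (M (alpha + eI I)%R) (J :\: I))%N.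
Proof.
case: hM => hmat hcon _.
have single a (i : E) (K : {set E}) : i \in K ->
    mrank (M a) K = (mrank (M a) [set i] + mrank (M (a + eI [set i])%R) (K :\ i))%N.
  move=> hiK; rewrite (@rank_single _ _ _ _ (hmat a).1 hiK) hcon rank_delete //.
  by rewrite setD11.
have [n] := ubnP #|I|; elim: n alpha I J hIJ => // n IH alpha I J hIJ hn.
have [->|[i hi]] := set_0Vmem I.
  have -> : (alpha + eI set0)%R = alpha.
    by apply/ffunP => j; rewrite !ffunE inE addr0.
  rewrite setD0; suff -> : mrank (M alpha) set0 = 0%N by [].
  have h0 : set0 \in M alpha by case: (hmat alpha) => [[]].
  apply: rankP; first by exists set0; rewrite ?h0 ?subxx ?cards0.
  by move=> B _; rewrite subset0 => /eqP ->; rewrite cards0.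
have hiJ : i \in J by exact: subsetP hIJ _ hi.
have hn' : (#|I :\ i| < n)%N.
  by move: hn (cardsD1 i I); rewrite hi add1n => h e; rewrite e ltnS in h.
rewrite (single _ _ _ hiJ) (single _ _ _ hi).
rewrite (IH _ (I :\ i) (J :\ i)) ?setSD // addnA.
have -> : (alpha + eI [set i] + eI (I :\ i) = alpha + eI I)%R.
  apply/ffunP => j; rewrite !ffunE -addrA; congr (_ + _).
  rewrite !inE; case: (eqVneq j i) => [->|] //=; first by rewrite hi.
have -> : J :\ i :\: (I :\ i) = J :\: I.
  apply/setP => x; rewrite !inE; case: (eqVneq x i) => [->|] //=.
  by rewrite hi.
done.
Qed.
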